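(* Let $\pi$ be a convergent cyclic pattern. Then $r_\pi=\rho(\pi)$ if and only if the code of $\pi$ is non-decreasing.
   Context: A cyclic pattern is the equivalence class of a cyclic permutation realized by a cycle $P$ on the line; the $P$-linear map $f$ agrees with the cycle on $P$ and is affine between consecutive points of $P$. $\pi$ is convergent if a representative has no points $x<y$ with $f(x)<x$, $f(y)>y$; then $f$ has a unique fixed point $a$. Over-rotation pair: $2p$ is the number of $x\in P$ with $f(x)-x$ and $f^2(x)-f(x)$ of different signs, $q$ the period, $\rho(\pi)=p/q$. $r_\pi$ is the left endpoint of the over-rotation interval $[r_\pi,\frac12]$ of $f$, which is the closure of the set of over-rotation numbers of non-fixed periodic orbits of $f$. Write $x>_a y$ if $x<y<a$ or $x>y>a$. Code: with $\rho=\rho(\pi)$ and $\varphi(y)=1$ if $y>a$ and $f(y)<a$, $0$ otherwise, $L(x_0)=0$ for the leftmost point $x_0$ of $P$ and $L(f(y))=L(y)+\rho-\varphi(y)$. The code is non-decreasing if $x>_a y$ implies $L(x)\le L(y)$ for all $x,y\in P$. *)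

(* Defs.v *)
From Stdlib Require Import Reals Lra Lia ZArith Arith.
Open Scope R_scope.

(* A cyclic pattern of period n is represented by its canonical
   representative: the cycle P = {0, 1, ..., n-1} (as reals) on which the
   cyclic permutation s acts.  All notions below are invariant under
   order-preserving relabelling, so this is no loss of generality. *)
Definition is_cyclic_perm (s : nat -> nat) (n : nat) : Prop :=
  (forall i, (i < n)%nat -> (s i < n)%nat) /\
  (forall i j, (i < n)%nat -> (j < n)%nat -> s i = s j -> i = j) /\
  (forall i, (i < n)%nat -> exists k, Nat.iter k s 0%nat = i).

(* The P-linear map: agrees with s on P and is affine on each [i, i+1].
   (Outside [0, n-1] it extends the extreme affine pieces; only its
   restriction to [0, n-1] is ever used.) *)
Definition plin (s : nat -> nat) (n : nat) (x : R) : R :=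
  let i := Nat.min (Z.to_nat (Int_part x)) (n - 2) in
  INR (s i) + (x - INR i) * (INR (s (S i)) - INR (s i)).

Fixpoint sumR (g : nat -> R) (k : nat) : R :=
  match k with
  | O => 0
  | S k' => sumR g k' + g k'
  end.

Definition indic (b : Prop) (d : {b} + {~ b}) : R := if d then 1 else 0.

(* Over-rotation number of the periodic orbit of x (of period m) under f:
   (number of orbit points y with f(y)-y, f(f(y))-f(y) of different signs)/(2m). *)
Definition ornum (f : R -> R) (x : R) (m : nat) : R :=
  sumR (fun k => let y := Nat.iter k f x in
          indic _ (Rlt_dec ((f y - y) * (f (f y) - f y)) 0)) m
  / (2 * INR m).

(* rho(pi) = p/q for the pattern itself, computed on P. *)
Definition rho_pat (s : nat -> nat) (n : nat) : R :=
  sumR (fun i => indic _ (Rlt_dec ((INR (s i) - INR i) *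
                                   (INR (s (s i)) - INR (s i))) 0)) n
  / (2 * INR n).

Definition convergent (s : nat -> nat) (n : nat) : Prop :=
  forall i j, (i < j)%nat -> (j < n)%nat -> ~ ((s i < i)%nat /\ (j < s j)%nat).

Definition ornum_set (s : nat -> nat) (n : nat) (r : R) : Prop :=
  exists (x : R) (m : nat),
    0 <= x <= INR (n - 1) /\ (2 <= m)%nat /\
    Nat.iter m (plin s n) x = x /\
    (forall k, (0 < k < m)%nat -> Nat.iter k (plin s n) x <> x) /\
    r = ornum (plin s n) x m.

Definition is_glb (E : R -> Prop) (r : R) : Prop :=
  (forall y, E y -> r <= y) /\ (forall b, (forall y, E y -> b <= y) -> b <= r).

(* r_pi = rho(pi), where r_pi is the left endpoint of the closure of the set
   of over-rotation numbers, i.e. its infimum. *)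
Definition r_pi_eq (s : nat -> nat) (n : nat) (v : R) : Prop :=
  is_glb (ornum_set s n) v.

Definition phi (s : nat -> nat) (a : R) (y : nat) : R :=
  indic _ (Rlt_dec a (INR y)) * indic _ (Rlt_dec (INR (s y)) a).

(* L at the point s^k(0): L(x0)=0, L(f y) = L y + rho - phi y. *)
Definition code (s : nat -> nat) (n : nat) (a : R) (k : nat) : R :=
  INR k * rho_pat s n - sumR (fun j => phi s a (Nat.iter j s 0%nat)) k.

Definition gt_a (a x y : R) : Prop := (x < y /\ y < a) \/ (x > y /\ y > a).

(* Non-decreasing code: x >_a y implies L(x) <= L(y), for x, y in P
   (every point of P is s^k(0) for a unique k < n). *)
Definition code_nondecreasing (s : nat -> nat) (n : nat) (a : R) : Prop :=
  forall k1 k2, (k1 < n)%nat -> (k2 < n)%nat ->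
    gt_a a (INR (Nat.iter k1 s 0%nat)) (INR (Nat.iter k2 s 0%nat)) ->
    code s n a k1 <= code s n a k2.

(* Main.v *)
Require Import Defs.
From Stdlib Require Import Reals.
From Stdlib Require Import Lra Lia ZArith List Permutation ClassicalEpsilon Classical.
Open Scope R_scope.

Lemma sumR_ext (g h : nat -> R) m :
  (forall k, (k < m)%nat -> g k = h k) -> sumR g m = sumR h m.
Proof.
  induction m; intros H; simpl; auto.
  rewrite IHm by (intros; apply H; lia). rewrite H by lia. reflexivity.
Qed.

Lemma sumR_le (g h : nat -> R) m :
  (forall k, (k < m)%nat -> g k <= h k) -> sumR g m <= sumR h m.
Proof.
  induction m; intros H; simpl. lra.
  assert (sumR g m <= sumR h m) by (apply IHm; intros; apply H; lia).
  assert (g m <= h m) by (apply H; lia). lra.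
Qed.

Lemma sumR_plus (g h : nat -> R) m :
  sumR (fun k => g k + h k) m = sumR g m + sumR h m.
Proof. induction m; simpl; lra. Qed.

Lemma sumR_minus (g h : nat -> R) m :
  sumR (fun k => g k - h k) m = sumR g m - sumR h m.
Proof. induction m; simpl; lra. Qed.

Lemma sumR_scal (c : R) (g : nat -> R) m :
  sumR (fun k => c * g k) m = c * sumR g m.
Proof. induction m; simpl; lra. Qed.

Lemma sumR_const (c : R) m : sumR (fun _ => c) m = INR m * c.
Proof. induction m; simpl sumR. simpl; lra. rewrite S_INR. lra. Qed.

Lemma sumR_tele (h : nat -> R) m :
  sumR (fun k => h (S k) - h k) m = h m - h O.
Proof. induction m; simpl; lra. Qed.

Lemma sumR_shift (g : nat -> R) m :
  sumR (fun k => g (S k)) m = sumR g m - g O + g m.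
Proof. induction m; simpl; lra. Qed.

Lemma sumR_split (g : nat -> R) m p :
  sumR g (m + p) = sumR g m + sumR (fun k => g (m + k)%nat) p.
Proof.
  induction p; simpl. rewrite Nat.add_0_r; lra.
  rewrite Nat.add_succ_r. simpl. rewrite IHp. lra.
Qed.

Fixpoint lsum (l : list R) : R := match l with nil => 0 | x :: l' => x + lsum l' end.

Lemma lsum_perm l l' : Permutation l l' -> lsum l = lsum l'.
Proof. induction 1; simpl; lra. Qed.

Lemma lsum_app l l' : lsum (l ++ l') = lsum l + lsum l'.
Proof. induction l; simpl; lra. Qed.

Lemma sumR_lsum (g : nat -> R) m : sumR g m = lsum (map g (seq 0 m)).
Proof.
  induction m; [reflexivity|].
  replace (sumR g (S m)) with (sumR g m + g m) by reflexivity.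
  replace (S m) with (m + 1)%nat by lia. rewrite seq_app, map_app, lsum_app. simpl. rewrite IHm. lra.
Qed.

Lemma sumR_reindex (g : nat -> R) (sg : nat -> nat) m :
  (forall k, (k < m)%nat -> (sg k < m)%nat) ->
  (forall i j, (i < m)%nat -> (j < m)%nat -> sg i = sg j -> i = j) ->
  sumR (fun k => g (sg k)) m = sumR g m.
Proof.
  intros H1 H2. rewrite !sumR_lsum.
  replace (map (fun k => g (sg k)) (seq 0 m)) with (map g (map sg (seq 0 m)))
    by (rewrite map_map; reflexivity).
  apply lsum_perm. apply Permutation_map.
  apply Permutation_map_same_l.
  - apply NoDup_map_NoDup_ForallPairs; [|apply seq_NoDup].
    intros x y Hx Hy. apply in_seq in Hx, Hy. apply H2; lia.
  - intros y Hy. apply in_map_iff in Hy. destruct Hy as [x [<- Hx]].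
    apply in_seq in Hx. apply in_seq. specialize (H1 x). lia.
Qed.

Lemma indic_lt1 u v : u < v -> indic _ (Rlt_dec u v) = 1.
Proof. intros H. unfold indic. destruct (Rlt_dec u v); [reflexivity|contradiction]. Qed.
Lemma indic_lt0 u v : ~ u < v -> indic _ (Rlt_dec u v) = 0.
Proof. intros H. unfold indic. destruct (Rlt_dec u v); [contradiction|reflexivity]. Qed.
Lemma indic_ext u v u' v' : u = u' -> v = v' -> indic _ (Rlt_dec u v) = indic _ (Rlt_dec u' v').
Proof. intros -> ->; reflexivity. Qed.

Lemma pigeon m (g : nat -> nat) :
  (forall i, (i <= m)%nat -> (g i < m)%nat) ->
  exists i j, (i < j <= m)%nat /\ g i = g j.
Proof.
  revert g. induction m; intros g H.
  - specialize (H 0%nat (le_n 0)). lia.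
  - destruct (classic (exists i, (i <= m)%nat /\ g i = g (S m))) as [[i [Hi E]]|Hno].
    + exists i, (S m). split; [lia|auto].
    + set (h := fun i => if Nat.eq_dec (g i) m then g (S m) else g i).
      assert (Hk : g (S m) <> m -> (g (S m) < m)%nat) by (specialize (H (S m)); lia).
      destruct (IHm h) as [i [j [Hij E]]].
      { intros i Hi. unfold h. destruct (Nat.eq_dec (g i) m).
        - apply Hk. intro E. apply Hno. exists i. split; [lia|congruence].
        - specialize (H i). lia. }
      unfold h in E. destruct (Nat.eq_dec (g i) m), (Nat.eq_dec (g j) m).
      * exists i, j. split; [lia|congruence].
      * exfalso; apply Hno; exists j; split; [lia|congruence].
      * exfalso; apply Hno; exists i; split; [lia|congruence].
      * exists i, j. split; [lia|auto].
Qed.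

Lemma min_exists (P : nat -> Prop) u : P u -> (0 < u)%nat ->
  exists d, (0 < d <= u)%nat /\ P d /\ forall k, (0 < k < d)%nat -> ~ P k.
Proof.
  induction u as [u IH] using (well_founded_induction Wf_nat.lt_wf). intros Hu Hpos.
  destruct (classic (exists k, (0 < k < u)%nat /\ P k)) as [[k [Hk Pk]]|Hno].
  - destruct (IH k ltac:(lia) Pk ltac:(lia)) as [d [Hd [Pd Hmin]]].
    exists d. split; [lia|auto].
  - exists u. split; [lia|]. split; auto. intros k Hk Pk. apply Hno. exists k; auto.
Qed.


Section Cyc.
Variables (s : nat -> nat) (n : nat).
Hypothesis Hn : (2 <= n)%nat.
Hypothesis Hcyc : is_cyclic_perm s n.

Definition orb k := Nat.iter k s 0%nat.

Lemma s_lt i : (i < n)%nat -> (s i < n)%nat.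
Proof. destruct Hcyc as [H _]. apply H. Qed.
Lemma s_inj i j : (i < n)%nat -> (j < n)%nat -> s i = s j -> i = j.
Proof. destruct Hcyc as [_ [H _]]. apply H. Qed.

Lemma orb_S k : orb (S k) = s (orb k).
Proof. reflexivity. Qed.

Lemma orb_lt k : (orb k < n)%nat.
Proof. induction k; [simpl; lia|]. rewrite orb_S. apply s_lt; auto. Qed.

Lemma orb_add p q : orb (p + q) = Nat.iter p s (orb q).
Proof. unfold orb. apply Nat.iter_add. Qed.

Lemma orb_diff i j : (i < j)%nat -> orb i = orb j -> orb (j - i) = 0%nat.
Proof.
  revert j. induction i; intros j Hij E.
  - rewrite Nat.sub_0_r. rewrite <- E. reflexivity.
  - destruct j as [|j]; [lia|]. rewrite !orb_S in E.
    apply s_inj in E; try apply orb_lt. simpl. apply IHi; [lia|auto].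
Qed.

Lemma orb_period d q r : orb d = 0%nat -> orb (q * d + r) = orb r.
Proof.
  intros Hd. induction q. simpl. reflexivity.
  replace (S q * d + r)%nat with (d + (q * d + r))%nat by lia.
  rewrite orb_add, IHq, <- orb_add.
  replace (d + r)%nat with (r + d)%nat by lia.
  rewrite orb_add, Hd. reflexivity.
Qed.

Lemma return_ge d : (0 < d)%nat -> orb d = 0%nat -> (n <= d)%nat.
Proof.
  intros Hd0 Pd.
  destruct (Compare_dec.le_lt_dec n d) as [|Hlt]; auto. exfalso.
  assert (Hcov : forall p, (p < n)%nat -> exists k, (k < d)%nat /\ orb k = p).
  { intros p Hp. destruct Hcyc as [_ [_ H3]]. destruct (H3 p Hp) as [k Hk]. change (orb k = p) in Hk.
    exists (k mod d). split. apply Nat.mod_upper_bound; lia.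
    rewrite (Nat.div_mod_eq k d) in Hk. rewrite Nat.mul_comm in Hk.
    rewrite orb_period in Hk; auto. }
  set (g := fun p => epsilon (inhabits 0%nat) (fun k => (k < d)%nat /\ orb k = p)).
  assert (Hg : forall p, (p < n)%nat -> (g p < d)%nat /\ orb (g p) = p).
  { intros p Hp. unfold g. apply epsilon_spec. apply Hcov; auto. }
  destruct (pigeon d g) as [i [j [Hij E]]].
  { intros i Hi. apply Hg. lia. }
  assert (orb (g i) = i) by (apply Hg; lia).
  assert (orb (g j) = j) by (apply Hg; lia).
  rewrite E in *. lia.
Qed.

Lemma orb_n : orb n = 0%nat.
Proof.
  destruct (pigeon n orb) as [i [j [Hij E]]]. { intros; apply orb_lt. }
  apply orb_diff in E; [|lia].
  destruct (min_exists (fun d => orb d = 0%nat) (j - i) E ltac:(lia)) as [d [Hd [Pd Hmin]]].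
  assert (n <= d)%nat by (apply return_ge; auto; lia).
  replace n with d by lia. auto.
Qed.

Lemma orb_mod k : orb k = orb (k mod n).
Proof.
  rewrite (Nat.div_mod_eq k n) at 1. rewrite Nat.mul_comm.
  apply orb_period. apply orb_n.
Qed.

Lemma orb_plus_n k : orb (n + k) = orb k.
Proof. replace (n + k)%nat with (1 * n + k)%nat by lia. apply orb_period, orb_n. Qed.

Lemma orb_inj i j : (i < n)%nat -> (j < n)%nat -> orb i = orb j -> i = j.
Proof.
  intros Hi Hj E.
  destruct (Nat.lt_trichotomy i j) as [H|[H|H]]; auto; exfalso.
  - apply orb_diff in E; auto. apply return_ge in E; lia.
  - symmetry in E. apply orb_diff in E; auto. apply return_ge in E; lia.
Qed.

Lemma orb_surj p : (p < n)%nat -> exists k, (k < n)%nat /\ orb k = p.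
Proof.
  intros Hp. destruct Hcyc as [_ [_ H3]]. destruct (H3 p Hp) as [k Hk]. change (orb k = p) in Hk.
  exists (k mod n). split. apply Nat.mod_upper_bound; lia.
  rewrite <- orb_mod. auto.
Qed.

Lemma sumR_orb (g : nat -> R) : sumR (fun k => g (orb k)) n = sumR g n.
Proof.
  apply sumR_reindex. intros; apply orb_lt. intros; apply orb_inj; auto.
Qed.

Lemma s_neq i : (i < n)%nat -> s i <> i.
Proof.
  intros Hi E. destruct (orb_surj i Hi) as [k [Hk Ek]].
  assert (orb (S k) = orb k) by (rewrite orb_S, Ek; auto).
  rewrite (orb_mod (S k)) in H.
  destruct (Nat.eq_dec (S k) n) as [e|ne].
  - rewrite e, Nat.mod_same in H by lia. apply orb_inj in H; lia.
  - rewrite Nat.mod_small in H by lia. apply orb_inj in H; lia.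
Qed.

End Cyc.


Definition Lip (K : R) (g : R -> R) := forall x y, Rabs (g x - g y) <= K * Rabs (x - y).

Lemma Lip_cont K g : 0 < K -> Lip K g -> continuity g.
Proof.
  intros HK HL x eps Heps. exists (eps / K). split.
  - apply Rdiv_lt_0_compat; auto.
  - intros y [_ Hy]. simpl in *. unfold R_dist in *.
    specialize (HL y x).
    apply Rle_lt_trans with (K * Rabs (y - x)); auto.
    apply Rmult_lt_compat_l with (r := K) in Hy; auto.
    replace (K * (eps / K)) with eps in Hy by (field; lra). lra.
Qed.

Lemma Lip_comp K1 K2 g h : 0 <= K1 -> Lip K1 g -> Lip K2 h -> Lip (K1 * K2) (fun x => g (h x)).
Proof.
  intros H0 H1 H2 x y. eapply Rle_trans. apply H1.
  rewrite Rmult_assoc. apply Rmult_le_compat_l; auto.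
Qed.

Lemma Int_part_eq z x : IZR z <= x < IZR z + 1 -> Int_part x = z.
Proof.
  intros [H1 H2]. destruct (base_Int_part x) as [B1 B2].
  assert (IZR z < IZR (Int_part x + 1)) by (rewrite plus_IZR; simpl; lra).
  assert (IZR (Int_part x) < IZR (z + 1)) by (rewrite plus_IZR; simpl; lra).
  apply lt_IZR in H. apply lt_IZR in H0. lia.
Qed.

Section Plin.
Variables (s : nat -> nat) (n : nat).
Hypothesis Hn : (2 <= n)%nat.
Hypothesis Hs : forall i, (i < n)%nat -> (s i < n)%nat.

Definition lin i x := INR (s i) + (x - INR i) * (INR (s (S i)) - INR (s i)).
Definition pidx x := Nat.min (Z.to_nat (Int_part x)) (n - 2).

Lemma plin_lin x : plin s n x = lin (pidx x) x.
Proof. reflexivity. Qed.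

Lemma Int_part_nat i x : INR i <= x < INR i + 1 -> Int_part x = Z.of_nat i.
Proof. intros H. apply Int_part_eq. rewrite <- INR_IZR_INZ. auto. Qed.

Lemma pidx_nat i x : (i <= n - 2)%nat -> INR i <= x < INR i + 1 -> pidx x = i.
Proof. intros Hi H. unfold pidx. rewrite (Int_part_nat i x H), Nat2Z.id. lia. Qed.

Lemma plin_piece i x : (i <= n - 2)%nat -> INR i <= x <= INR i + 1 -> plin s n x = lin i x.
Proof.
  intros Hi [H1 H2]. rewrite plin_lin.
  destruct (Rlt_dec x (INR i + 1)).
  - rewrite (pidx_nat i); auto.
  - assert (E : x = INR (S i)) by (rewrite S_INR; lra).
    destruct (Nat.eq_dec i (n - 2)).
    + unfold pidx. rewrite (Int_part_nat (S i)), Nat2Z.id by (rewrite E, S_INR; lra).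
      replace (Nat.min (S i) (n - 2)) with i by lia. reflexivity.
    + rewrite (pidx_nat (S i)) by (try lia; rewrite E, S_INR; lra).
      unfold lin. rewrite E, S_INR. ring.
Qed.

Lemma plin_nat i : (i < n)%nat -> plin s n (INR i) = INR (s i).
Proof.
  intros Hi. destruct (Nat.eq_dec i (n - 1)).
  - rewrite (plin_piece (n - 2)); [|lia|].
    + unfold lin. replace (S (n - 2)) with i by lia.
      replace (INR i) with (INR (n - 2) + 1) by (rewrite <- S_INR; f_equal; lia). ring.
    + replace (INR i) with (INR (n - 2) + 1) by (rewrite <- S_INR; f_equal; lia). lra.
  - rewrite (plin_piece i); [|lia|lra]. unfold lin. ring.
Qed.

Lemma pidx_le x : (pidx x <= n - 2)%nat.
Proof. unfold pidx. lia. Qed.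

Lemma Int_part_mono x y : x <= y -> (Int_part x <= Int_part y)%Z.
Proof.
  intros H. destruct (base_Int_part x), (base_Int_part y).
  assert (IZR (Int_part x) < IZR (Int_part y + 1)) by (rewrite plus_IZR; simpl; lra).
  apply lt_IZR in H4. lia.
Qed.

Lemma pidx_mono x y : x <= y -> (pidx x <= pidx y)%nat.
Proof.
  intros H. unfold pidx. apply Int_part_mono in H. lia.
Qed.

Lemma slope_bound i : (i <= n - 2)%nat -> Rabs (INR (s (S i)) - INR (s i)) <= INR n.
Proof.
  intros Hi. assert (A1 := Hs i ltac:(lia)). assert (A2 := Hs (S i) ltac:(lia)).
  apply lt_INR in A1. apply lt_INR in A2. pose proof (pos_INR (s i)). pose proof (pos_INR (s (S i))).
  apply Rabs_le. lra.
Qed.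

Lemma lin_lip i x y : (i <= n - 2)%nat -> Rabs (lin i x - lin i y) <= INR n * Rabs (x - y).
Proof.
  intros Hi. unfold lin.
  replace (INR (s i) + (x - INR i) * (INR (s (S i)) - INR (s i)) -
   (INR (s i) + (y - INR i) * (INR (s (S i)) - INR (s i)))) with
   ((INR (s (S i)) - INR (s i)) * (x - y)) by ring.
  rewrite Rabs_mult. apply Rmult_le_compat_r. apply Rabs_pos. apply slope_bound; auto.
Qed.

Lemma plin_lip_aux d : forall x y, x <= y -> (pidx y - pidx x = d)%nat ->
  Rabs (plin s n y - plin s n x) <= INR n * (y - x).
Proof.
  induction d; intros x y Hxy Hd.
  - assert (pidx x = pidx y) by (pose proof (pidx_mono x y Hxy); lia).
    rewrite !plin_lin, H. replace (y - x) with (Rabs (y - x)) by (apply Rabs_right; lra).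
    apply lin_lip, pidx_le.
  - set (i := pidx x). assert (Hi : (i < pidx y)%nat) by lia.
    assert (Hin : (i < n - 2)%nat) by (pose proof (pidx_le y); lia).
    assert (Hx : x < INR i + 1).
    { destruct (base_Int_part x) as [B1 B2]. unfold i, pidx in *.
      destruct (Z_lt_le_dec (Int_part x) 0).
      - assert (IZR (Int_part x) <= -1) by (apply IZR_le; lia).
        pose proof (pos_INR (Nat.min (Z.to_nat (Int_part x)) (n - 2))). lra.
      - assert (Z.to_nat (Int_part x) = i) by (unfold i, pidx; lia).
        assert (INR i = IZR (Int_part x)) by (rewrite <- H, INR_IZR_INZ, Z2Nat.id; auto).
        fold i. lra. }
    assert (Hy : INR i + 1 <= y).
    { destruct (base_Int_part y) as [B1 B2]. unfold pidx in Hi.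
      assert (Z.of_nat (S i) <= Int_part y)%Z by lia.
      apply IZR_le in H. rewrite <- INR_IZR_INZ, S_INR in H. lra. }
    set (b := INR i + 1).
    assert (Hb : pidx b = S i) by (apply pidx_nat; [lia| unfold b; rewrite S_INR; lra]).
    assert (Fx : plin s n x = lin i x) by (rewrite plin_lin; reflexivity).
    assert (Fb : plin s n b = lin i b) by (apply plin_piece; unfold b; [lia|lra]).
    assert (IH := IHd b y Hy ltac:(lia)).
    assert (Rabs (plin s n b - plin s n x) <= INR n * (b - x)).
    { rewrite Fx, Fb. replace (b - x) with (Rabs (b - x)) by (apply Rabs_right; unfold b; lra).
      apply lin_lip; lia. }
    replace (plin s n y - plin s n x) with ((plin s n y - plin s n b) + (plin s n b - plin s n x)) by ring.
    eapply Rle_trans. apply Rabs_triang. nra.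
Qed.

Lemma plin_Lip : Lip (INR n) (plin s n).
Proof.
  intros x y. destruct (Rle_dec x y).
  - rewrite Rabs_minus_sym. rewrite (Rabs_minus_sym x y). rewrite (Rabs_right (y - x)) by lra.
    eapply plin_lip_aux; eauto.
  - rewrite (Rabs_right (x - y)) by lra. eapply plin_lip_aux; eauto. lra.
Qed.

Lemma Lip_iter k : Lip (INR n ^ k) (Nat.iter k (plin s n)).
Proof.
  induction k; simpl.
  - intros x y. simpl. lra.
  - assert (H := Lip_comp (INR n) (INR n ^ k) _ _ (pos_INR n) plin_Lip IHk). intros x y. apply H.
Qed.

Lemma iter_cont k : continuity (Nat.iter k (plin s n)).
Proof.
  apply (Lip_cont (INR n ^ k)). apply pow_lt. apply lt_0_INR. lia. apply Lip_iter.
Qed.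

End Plin.

Lemma pidx_piece (s : nat -> nat) (n : nat) x : (2 <= n)%nat -> 0 <= x <= INR (n - 1) ->
  INR (pidx n x) <= x <= INR (pidx n x) + 1.
Proof.
  intros Hn [H1 H2]. unfold pidx. destruct (base_Int_part x) as [B1 B2].
  assert (Hp : (0 <= Int_part x)%Z).
  { assert (IZR (-1) < IZR (Int_part x)) by lra. apply lt_IZR in H. lia. }
  destruct (Compare_dec.le_lt_dec (Z.to_nat (Int_part x)) (n - 2)).
  - replace (Nat.min (Z.to_nat (Int_part x)) (n - 2)) with (Z.to_nat (Int_part x)) by lia.
    rewrite INR_IZR_INZ, Z2Nat.id by auto. lra.
  - replace (Nat.min (Z.to_nat (Int_part x)) (n - 2)) with (n - 2)%nat by lia.
    assert (INR (n - 1) <= IZR (Int_part x)).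
    { rewrite INR_IZR_INZ. apply IZR_le. lia. }
    replace (INR (n - 1)) with (INR (n - 2) + 1) in * by (rewrite <- S_INR; f_equal; lia).
    lra.
Qed.


Lemma lub_approx (E : R -> Prop) m d : is_lub E m -> 0 < d -> exists e, E e /\ m - d < e <= m.
Proof.
  intros [Hub Hl] Hd. apply NNPP. intros Hno.
  assert (is_upper_bound E (m - d)).
  { intros e He. destruct (Rle_dec e (m - d)); auto. exfalso. apply Hno. exists e.
    split; auto. split; [lra| apply Hub; auto]. }
  apply Hl in H. lra.
Qed.

Lemma abs_bnd u B : Rabs u <= B -> - B <= u <= B.
Proof. intros H. pose proof (Rle_abs u). pose proof (Rle_abs (- u)). rewrite Rabs_Ropp in H1. lra. Qed.

Lemma lip_lower K g x y : Lip K g -> g x - K * Rabs (x - y) <= g y.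
Proof. intros HL. specialize (HL x y). apply abs_bnd in HL. lra. Qed.
Lemma lip_upper K g x y : Lip K g -> g y <= g x + K * Rabs (x - y).
Proof. intros HL. specialize (HL x y). apply abs_bnd in HL. lra. Qed.

Lemma PB0 K g p q c d : 0 < K -> Lip K g -> p < q -> g p = c -> g q = d -> c < d ->
  exists l r, p <= l < r /\ r <= q /\ g l = c /\ g r = d /\
    forall t, l <= t <= r -> c <= g t <= d.
Proof.
  intros HK HL Hpq Hp Hq Hcd.
  set (E1 := fun t => p <= t <= q /\ g t <= c).
  destruct (completeness E1) as [l Hl].
  { exists q. intros t [Ht _]. lra. }
  { exists p. split; lra. }
  assert (Hpl : p <= l) by (apply (proj1 Hl); split; lra).
  assert (Hlq : l <= q) by (apply (proj2 Hl); intros t [Ht _]; lra).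
  assert (ClA : forall t, l < t <= q -> c < g t).
  { intros t Ht. destruct (Rlt_dec c (g t)); auto. exfalso.
    assert (t <= l) by (apply (proj1 Hl); split; [lra|lra]). lra. }
  assert (Hgl1 : g l <= c).
  { destruct (Rle_dec (g l) c); auto. exfalso.
    set (dl := (g l - c) / K). assert (0 < dl) by (unfold dl; apply Rdiv_lt_0_compat; lra).
    destruct (lub_approx E1 l dl Hl H) as [e [[He1 He2] He3]].
    pose proof (lip_lower K g l e HL). rewrite Rabs_right in H0 by lra.
    assert (K * (l - e) < K * dl) by (apply Rmult_lt_compat_l; lra).
    unfold dl in H1. replace (K * ((g l - c) / K)) with (g l - c) in H1 by (field; lra). lra. }
  assert (Hlq' : l < q) by (destruct (Rle_dec q l); [assert (l = q) by lra; subst; lra|lra]).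
  assert (Hgl : g l = c).
  { destruct (Rle_dec c (g l)); [lra|]. exfalso.
    set (dl := (c - g l) / K). assert (0 < dl) by (unfold dl; apply Rdiv_lt_0_compat; lra).
    set (t := Rmin q (l + dl / 2)).
    assert (Ht : l < t <= q) by (unfold t; apply Rmin_case_strong; intros; lra).
    pose proof (ClA t Ht). pose proof (lip_upper K g l t HL). rewrite Rabs_left1 in H1 by lra.
    assert (t - l <= dl / 2) by (unfold t; apply Rmin_case_strong; intros; lra).
    assert (K * (t - l) <= K * (dl / 2)) by (apply Rmult_le_compat_l; lra).
    unfold dl in H3. replace (K * ((c - g l) / K / 2)) with ((c - g l) / 2) in H3 by (field; lra).
    lra. }
  set (E2 := fun t => l <= t <= q /\ forall w, l <= w <= t -> g w <= d).
  destruct (completeness E2) as [r Hr].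
  { exists q. intros t [Ht _]. lra. }
  { exists l. split; [lra|]. intros w Hw. replace w with l by lra. lra. }
  assert (Hlr : l <= r) by (apply (proj1 Hr); split; [lra|]; intros w Hw; replace w with l by lra; lra).
  assert (Hrq : r <= q) by (apply (proj2 Hr); intros t [Ht _]; lra).
  assert (ClB : forall w, l <= w < r -> g w <= d).
  { intros w Hw. destruct (lub_approx E2 r (r - w) Hr ltac:(lra)) as [e [[He1 He2] He3]].
    apply He2. lra. }
  assert (Hgr1 : g r <= d).
  { destruct (Rle_dec (g r) d); auto. exfalso.
    set (dl := (g r - d) / K). assert (0 < dl) by (unfold dl; apply Rdiv_lt_0_compat; lra).
    destruct (lub_approx E2 r dl Hr H) as [e [[He1 He2] He3]].
    assert (g e <= d) by (apply He2; lra).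
    pose proof (lip_lower K g r e HL). rewrite Rabs_right in H1 by lra.
    assert (K * (r - e) < K * dl) by (apply Rmult_lt_compat_l; lra).
    unfold dl in H2. replace (K * ((g r - d) / K)) with (g r - d) in H2 by (field; lra). lra. }
  assert (Hgr : g r = d).
  { destruct (Rle_dec d (g r)); [lra|]. exfalso.
    assert (Hrq' : r < q) by (destruct (Rle_dec q r); [assert (r = q) by lra; subst; lra|lra]).
    set (dl := (d - g r) / K). assert (0 < dl) by (unfold dl; apply Rdiv_lt_0_compat; lra).
    set (t := Rmin q (r + dl / 2)).
    assert (Ht : r < t <= q) by (unfold t; apply Rmin_case_strong; intros; lra).
    assert (t - r <= dl / 2) by (unfold t; apply Rmin_case_strong; intros; lra).
    assert (E2 t).
    { split; [lra|]. intros w Hw.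
      destruct (Rlt_dec w r); [apply ClB; lra|].
      destruct (Req_dec w r) as [->|]; [lra|].
      pose proof (lip_upper K g r w HL). rewrite Rabs_left1 in H2 by lra.
      assert (K * (w - r) <= K * (dl / 2)) by (apply Rmult_le_compat_l; lra).
      unfold dl in H3. replace (K * ((d - g r) / K / 2)) with ((d - g r) / 2) in H3 by (field; lra).
      lra. }
    assert (t <= r) by (apply (proj1 Hr); auto). lra. }
  exists l, r. assert (l < r) by (destruct (Req_dec l r) as [E|E]; [subst; lra|lra]).
  split; [lra|]. split; [lra|]. split; auto. split; auto.
  intros t Ht. split.
  - destruct (Req_dec t l) as [->|]; [lra|]. apply Rlt_le, ClA. lra.
  - destruct (Req_dec t r) as [->|]; [lra|]. apply ClB. lra.
Qed.

Definition inh u v t := (u <= t <= v) \/ (v <= t <= u).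

Lemma inh_conv u v p q t : inh u v p -> inh u v q -> inh p q t -> inh u v t.
Proof. unfold inh. intros; lra. Qed.

Lemma PB1 K g p q c d : 0 < K -> Lip K g -> p < q -> g p = c -> g q = d -> c <> d ->
  exists l r, p <= l <= q /\ p <= r <= q /\ g l = c /\ g r = d /\
    forall t, inh l r t -> inh c d (g t).
Proof.
  intros HK HL Hpq Hp Hq Hcd.
  destruct (Rlt_dec c d).
  - destruct (PB0 K g p q c d HK HL Hpq Hp Hq r) as [l [r' [H1 [H2 [H3 [H4 H5]]]]]].
    exists l, r'. split; [lra|]. split; [lra|]. split; auto. split; auto.
    intros t [Ht|Ht]; [left; apply H5; auto|]. lra.
  - assert (HL' : Lip K (fun x => - g x)).
    { intros x y. replace (- g x - - g y) with (- (g x - g y)) by ring. rewrite Rabs_Ropp. apply HL. }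
    destruct (PB0 K (fun x => - g x) p q (- c) (- d) HK HL' Hpq ltac:(cbv beta; lra)
      ltac:(cbv beta; lra) ltac:(lra)) as [l [r' [H1 [H2 [H3 [H4 H5]]]]]].
    exists l, r'. split; [lra|]. split; [lra|]. split; [lra|]. split; [lra|].
    intros t [Ht|Ht]; [|lra]. specialize (H5 t Ht). right. lra.
Qed.

Lemma PB K g p q c d : 0 < K -> Lip K g -> g p = c -> g q = d -> c <> d ->
  exists l r, inh p q l /\ inh p q r /\ g l = c /\ g r = d /\
    forall t, inh l r t -> inh c d (g t).
Proof.
  intros HK HL Hp Hq Hcd.
  destruct (Rtotal_order p q) as [Hpq|[Hpq|Hpq]].
  - destruct (PB1 K g p q c d HK HL Hpq Hp Hq Hcd) as [l [r [H1 [H2 H3]]]].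
    exists l, r. unfold inh. split; [lra|]. split; [lra|]. auto.
  - subst. congruence.
  - set (h := fun x => g (- x)).
    assert (HL' : Lip K h).
    { intros x y. unfold h. eapply Rle_trans. apply HL.
      replace (- x - - y) with (- (x - y)) by ring. rewrite Rabs_Ropp. lra. }
    destruct (PB1 K h (- p) (- q) c d HK HL' ltac:(lra) ltac:(unfold h; rewrite Ropp_involutive; auto)
      ltac:(unfold h; rewrite Ropp_involutive; auto) Hcd) as [l [r [H1 [H2 [H3 [H4 H5]]]]]].
    exists (- l), (- r). unfold inh. split; [lra|]. split; [lra|]. split; auto. split; auto.
    intros t Ht. specialize (H5 (- t)). unfold h in H5. rewrite Ropp_involutive in H5.
    apply H5. unfold inh in *. lra.
Qed.

Lemma IVT_hull g p q w : continuity g -> inh (g p) (g q) w -> exists t, inh p q t /\ g t = w.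
Proof.
  intros Hc Hw.
  set (h := fun t => g t - w).
  assert (Hh : continuity h) by (apply continuity_minus; auto; apply continuity_const; intros x y; auto).
  destruct (Rle_dec p q).
  - destruct (IVT_cor h p q Hh r) as [t [Ht E]].
    { unfold h. unfold inh in Hw. destruct Hw; nra. }
    exists t. split. left; auto. unfold h in E. lra.
  - destruct (IVT_cor h q p Hh ltac:(lra)) as [t [Ht E]].
    { unfold h. unfold inh in Hw. destruct Hw; nra. }
    exists t. split. right; auto. unfold h in E. lra.
Qed.


Section Fix.
Variables (s : nat -> nat) (n : nat) (a : R).
Hypothesis Hn : (2 <= n)%nat.
Hypothesis Hcyc : is_cyclic_perm s n.
Hypothesis Hconv : convergent s n.
Hypothesis Ha : 0 <= a <= INR (n - 1).
Hypothesis Hfa : plin s n a = a.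

Notation f := (plin s n).
Notation Hs := (s_lt s n Hcyc).

Lemma nat_lt_INR m k : (m < k)%nat -> INR m + 1 <= INR k.
Proof. intros H. rewrite <- S_INR. apply le_INR. lia. Qed.

Lemma INR_n1 : INR (n - 1) = INR n - 1.
Proof. rewrite minus_INR by lia. simpl. lra. Qed.

Lemma piece_val i x : (i <= n - 2)%nat -> INR i <= x <= INR i + 1 ->
  f x = (1 - (x - INR i)) * INR (s i) + (x - INR i) * INR (s (S i)).
Proof. intros Hi Hx. rewrite (plin_piece s n Hn i x Hi Hx). unfold lin. ring. Qed.

Lemma s_bound i : (i < n)%nat -> 0 <= INR (s i) <= INR n - 1.
Proof.
  intros Hi. pose proof (Hs i Hi). split. apply pos_INR.
  rewrite <- INR_n1. apply le_INR. lia.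
Qed.

Lemma f_range x : 0 <= x <= INR (n - 1) -> 0 <= f x <= INR (n - 1).
Proof.
  intros Hx. pose proof (pidx_piece s n x Hn Hx) as Hp.
  pose proof (pidx_le n Hn x).
  rewrite (piece_val (pidx n x) x); auto.
  pose proof (s_bound (pidx n x) ltac:(lia)). pose proof (s_bound (S (pidx n x)) ltac:(lia)).
  rewrite INR_n1. set (t := x - INR (pidx n x)). assert (0 <= t <= 1) by (unfold t; lra).
  split; nra.
Qed.

Lemma iter_range k x : 0 <= x <= INR (n - 1) -> 0 <= Nat.iter k f x <= INR (n - 1).
Proof. intros H. induction k; simpl; auto. apply f_range; auto. Qed.

Lemma iter_nat k p : (p < n)%nat -> Nat.iter k f (INR p) = INR (Nat.iter k s p).
Proof.
  intros Hp. induction k; simpl; auto. rewrite IHk. apply plin_nat; auto.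
  clear IHk. induction k; simpl; [auto| apply Hs; auto].
Qed.

Lemma a_not_nat i : (i < n)%nat -> INR i <> a.
Proof.
  intros Hi E. pose proof (plin_nat s n Hn i Hi). rewrite E, Hfa in H.
  rewrite <- E in H. apply INR_eq in H. apply (s_neq s n Hn Hcyc i Hi). auto.
Qed.

Definition k0 := pidx n a.

Lemma k0_le : (k0 <= n - 2)%nat.
Proof. apply (pidx_le n Hn). Qed.

Lemma a_in : INR k0 < a < INR k0 + 1.
Proof.
  pose proof (pidx_piece s n a Hn Ha). fold k0 in H.
  assert (INR k0 <> a) by (apply a_not_nat; pose proof k0_le; lia).
  assert (INR (S k0) <> a) by (apply a_not_nat; pose proof k0_le; lia).
  rewrite S_INR in H1. lra.
Qed.

Lemma sk0 : (k0 < s k0)%nat /\ (s (S k0) < S k0)%nat.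
Proof.
  pose proof k0_le. pose proof a_in.
  assert (E := piece_val k0 a H ltac:(lra)). rewrite Hfa in E.
  assert (N1 := s_neq s n Hn Hcyc k0 ltac:(lia)).
  assert (N2 := s_neq s n Hn Hcyc (S k0) ltac:(lia)).
  set (t := a - INR k0) in E. assert (0 < t < 1) by (unfold t; lra).
  destruct (Nat.lt_trichotomy (s k0) k0) as [L1|[L1|L1]]; [|contradiction|];
  destruct (Nat.lt_trichotomy (s (S k0)) (S k0)) as [L2|[L2|L2]]; try contradiction.
  - apply nat_lt_INR in L1. apply nat_lt_INR in L2. rewrite S_INR in L2.
    exfalso. unfold t in *. nra.
  - exfalso. apply (Hconv k0 (S k0)); [lia|lia|auto].
  - split; auto.
  - exfalso. apply nat_lt_INR in L1. apply nat_lt_INR in L2.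
    rewrite !S_INR in *. unfold t in *. nra.
Qed.

Lemma left_pos i : (i <= k0)%nat -> (i < s i)%nat.
Proof.
  intros Hi. destruct (Nat.eq_dec i k0) as [->|]; [apply sk0|].
  pose proof k0_le.
  destruct (Nat.lt_trichotomy (s i) i) as [L|[L|L]]; auto.
  - exfalso. apply (Hconv i k0); [lia|lia|]. split; auto. apply sk0.
  - exfalso. apply (s_neq s n Hn Hcyc i); [lia|auto].
Qed.

Lemma right_neg j : (S k0 <= j < n)%nat -> (s j < j)%nat.
Proof.
  intros Hj. destruct (Nat.eq_dec j (S k0)) as [->|]; [apply sk0|].
  destruct (Nat.lt_trichotomy (s j) j) as [L|[L|L]]; auto.
  - exfalso. apply (s_neq s n Hn Hcyc j); [lia|auto].
  - exfalso. apply (Hconv (S k0) j); [lia|lia|]. split; auto. apply sk0.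
Qed.

Definition lam := INR (s (S k0)) - INR (s k0).

Lemma lam_neg : lam <= -1.
Proof.
  unfold lam. destruct sk0 as [L1 L2].
  apply nat_lt_INR in L1. apply nat_lt_INR in L2.
  rewrite S_INR in L2. lra.
Qed.

Lemma near_a x : INR k0 <= x <= INR k0 + 1 -> f x - a = lam * (x - a).
Proof.
  intros Hx. pose proof k0_le.
  rewrite <- Hfa at 1. rewrite (plin_piece s n Hn k0 x H Hx).
  rewrite (plin_piece s n Hn k0 a H ltac:(pose proof a_in; lra)).
  unfold lin, lam. ring.
Qed.

Lemma pidx_a_left x : x < a -> (pidx n x <= k0)%nat.
Proof. intros H. apply (pidx_mono n Hn). lra. Qed.
Lemma pidx_a_right x : a < x -> (k0 <= pidx n x)%nat.
Proof. intros H. apply (pidx_mono n Hn). lra. Qed.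

Lemma sign_f x : 0 <= x <= INR (n - 1) ->
  (x < a -> x < f x) /\ (a < x -> f x < x).
Proof.
  intros Hx. pose proof (pidx_piece s n x Hn Hx) as Hp. pose proof (pidx_le n Hn x).
  set (i := pidx n x) in *. pose proof a_in. pose proof lam_neg.
  split; intros Hxa.
  - assert (i <= k0)%nat by (apply pidx_a_left; auto).
    destruct (Nat.eq_dec i k0) as [E|E].
    + rewrite E in Hp. pose proof (near_a x Hp). nra.
    + rewrite (piece_val i x) by auto.
      assert (L1 := left_pos i ltac:(lia)). assert (L2 := left_pos (S i) ltac:(lia)).
      apply nat_lt_INR in L1. apply nat_lt_INR in L2.
      rewrite !S_INR in *. set (t := x - INR i). assert (0 <= t <= 1) by (unfold t; lra).
      replace x with ((1 - t) * INR i + t * (INR i + 1)) at 1 by (unfold t; ring). nra.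
  - assert (k0 <= i)%nat by (apply pidx_a_right; auto).
    destruct (Nat.eq_dec i k0) as [E|E].
    + rewrite E in Hp. pose proof (near_a x Hp). nra.
    + rewrite (piece_val i x) by auto.
      assert (L1 := right_neg i ltac:(lia)). assert (L2 := right_neg (S i) ltac:(lia)).
      destruct i as [|i']; [lia|].
      apply nat_lt_INR in L1. apply nat_lt_INR in L2.
      rewrite !S_INR in *. set (t := x - (INR i' + 1)). assert (0 <= t <= 1) by (unfold t; lra).
      replace x with ((1 - t) * (INR i' + 1) + t * (INR i' + 1 + 1)) at 1 by (unfold t; ring). nra.
Qed.

Lemma fix_unique x : 0 <= x <= INR (n - 1) -> f x = x -> x = a.
Proof.
  intros Hx E. destruct (sign_f x Hx) as [H1 H2].
  destruct (Rtotal_order x a) as [L|[L|L]]; auto.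
  - apply H1 in L. lra.
  - apply H2 in L. lra.
Qed.

Definition phr y := indic _ (Rlt_dec a y) * indic _ (Rlt_dec (f y) a).
Definition scr y := indic _ (Rlt_dec ((f y - y) * (f (f y) - f y)) 0).
Definition Gr y := indic _ (Rlt_dec a y).

Lemma sc_decomp y : 0 <= y <= INR (n - 1) -> y <> a -> f y <> a ->
  scr y = 2 * phr y + (Gr (f y) - Gr y).
Proof.
  intros Hy N1 N2. assert (Hfy := f_range y Hy).
  destruct (sign_f y Hy) as [S1 S2].
  destruct (sign_f (f y) Hfy) as [T1 T2].
  assert (y < a \/ a < y) as [L1|L1] by lra; assert (f y < a \/ a < f y) as [L2|L2] by lra;
  try specialize (S1 L1); try specialize (S2 L1); try specialize (T1 L2); try specialize (T2 L2);
  unfold scr, phr, Gr, indic;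
  repeat match goal with |- context [Rlt_dec ?u ?v] => destruct (Rlt_dec u v) end; try nra.
Qed.

Lemma orbit_sc z m : 0 <= z <= INR (n - 1) -> Nat.iter m f z = z ->
  (forall k, Nat.iter k f z <> a) ->
  sumR (fun k => scr (Nat.iter k f z)) m = 2 * sumR (fun k => phr (Nat.iter k f z)) m.
Proof.
  intros Hz Hm Ha'.
  rewrite (sumR_ext _ (fun k => 2 * phr (Nat.iter k f z) +
     (Gr (Nat.iter (S k) f z) - Gr (Nat.iter k f z)))).
  - rewrite sumR_plus, sumR_scal, (sumR_tele (fun k => Gr (Nat.iter k f z))).
    rewrite Hm. simpl. lra.
  - intros k Hk. simpl. apply sc_decomp.
    apply iter_range; auto. apply Ha'. apply (Ha' (S k)).
Qed.

Lemma phi_phr p : (p < n)%nat -> phi s a p = phr (INR p).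
Proof.
  intros Hp. unfold phi, phr. f_equal. apply indic_ext; auto.
  symmetry. apply plin_nat; auto.
Qed.

Lemma phi_bounds p : 0 <= phi s a p <= 1.
Proof.
  unfold phi, indic. destruct (Rlt_dec a (INR p)), (Rlt_dec (INR (s p)) a); lra.
Qed.

Lemma phi_left p : INR p < a -> phi s a p = 0.
Proof. intros H. unfold phi. rewrite indic_lt0 by lra. lra. Qed.

Lemma phi_right p : a < INR p -> phi s a p = indic _ (Rlt_dec (INR (s p)) a).
Proof. intros H. unfold phi. rewrite indic_lt1 by lra. lra. Qed.

Definition Phi k := sumR (fun j => phi s a (orb s j)) k.

Lemma rho_Phi : INR n * rho_pat s n = Phi n.
Proof.
  unfold rho_pat.
  set (g := fun i => indic _ (Rlt_dec ((INR (s i) - INR i) * (INR (s (s i)) - INR (s i))) 0)).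
  change (INR n * (sumR g n / (2 * INR n)) = Phi n).
  rewrite <- (sumR_orb s n Hn Hcyc g).
  rewrite (sumR_ext _ (fun k => scr (Nat.iter k f (INR 0)))).
  - rewrite orbit_sc.
    + rewrite (sumR_ext _ (fun k => phi s a (orb s k))). unfold Phi.
      assert (0 < INR n) by (apply lt_0_INR; lia). field. apply Rgt_not_eq. lra.
      intros k Hk. rewrite iter_nat by lia. rewrite phi_phr. reflexivity. apply orb_lt; auto.
    + simpl. rewrite INR_n1 by auto. assert (2 <= INR n) by (apply (le_INR 2); lia). lra.
    + rewrite iter_nat by lia. fold (orb s n). rewrite (orb_n s n Hn Hcyc). reflexivity.
    + intros k. rewrite iter_nat by lia. apply a_not_nat; auto. apply orb_lt; auto.
  - intros k Hk. rewrite iter_nat by lia. fold (orb s k). unfold g, scr.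
    pose proof (orb_lt s n Hn Hcyc k) as H1.
    pose proof (Hs _ H1) as H2.
    apply indic_ext; auto.
    rewrite !plin_nat; auto.
Qed.

Lemma code_S k : code s n a (S k) = code s n a k + rho_pat s n - phi s a (orb s k).
Proof. unfold code. rewrite S_INR. simpl. fold (orb s k). lra. Qed.

Lemma code_plus_n k : code s n a (n + k) = code s n a k.
Proof.
  unfold code. change (sumR (fun j => phi s a (Nat.iter j s 0%nat)) (n + k)) with (Phi (n + k)).
  change (sumR (fun j => phi s a (Nat.iter j s 0%nat)) k) with (Phi k).
  unfold Phi. rewrite sumR_split.
  rewrite (sumR_ext (fun j => phi s a (orb s (n + j))) (fun j => phi s a (orb s j))).
  2:{ intros; rewrite (orb_plus_n s n Hn Hcyc); auto. }
  fold (Phi n) (Phi k). rewrite <- rho_Phi. rewrite plus_INR. unfold Phi. ring.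
Qed.

Lemma code_mod k : code s n a k = code s n a (k mod n).
Proof.
  rewrite (Nat.div_mod_eq k n) at 1. generalize (k / n)%nat. intros q.
  induction q. rewrite Nat.mul_0_r. reflexivity.
  replace (n * S q + k mod n)%nat with (n + (n * q + k mod n))%nat by lia.
  rewrite code_plus_n. auto.
Qed.

Lemma code_0 : code s n a 0 = 0.
Proof. unfold code. simpl. lra. Qed.

Definition idx p := epsilon (inhabits 0%nat) (fun k => (k < n)%nat /\ orb s k = p).

Lemma idx_spec p : (p < n)%nat -> (idx p < n)%nat /\ orb s (idx p) = p.
Proof. intros Hp. unfold idx. apply epsilon_spec. apply orb_surj; auto. Qed.

Lemma idx_orb k : (k < n)%nat -> idx (orb s k) = k.
Proof.
  intros Hk. destruct (idx_spec (orb s k)) as [H1 H2]. apply orb_lt; auto.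
  apply (orb_inj s n Hn Hcyc); auto.
Qed.

Definition Lpt p := code s n a (idx p).

Lemma Lpt_step p : (p < n)%nat -> Lpt (s p) = Lpt p + rho_pat s n - phi s a p.
Proof.
  intros Hp. destruct (idx_spec p Hp) as [H1 H2]. unfold Lpt.
  set (k := idx p) in *.
  assert (E : s p = orb s ((S k) mod n)).
  { rewrite <- (orb_mod s n Hn Hcyc). rewrite orb_S. congruence. }
  rewrite E, idx_orb by (apply Nat.mod_upper_bound; lia).
  rewrite <- code_mod. rewrite code_S. congruence.
Qed.

Lemma rho_half : rho_pat s n <= 1 / 2.
Proof.
  assert (H : 2 * Phi n <= INR n).
  { unfold Phi.
    assert (Sh : sumR (fun j => phi s a (orb s (S j))) n = sumR (fun j => phi s a (orb s j)) n).
    { rewrite (sumR_shift (fun j => phi s a (orb s j))). cbv beta. rewrite (orb_n s n Hn Hcyc).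
      change (orb s 0) with 0%nat. lra. }
    replace (2 * sumR (fun j => phi s a (orb s j)) n) with
      (sumR (fun j => phi s a (orb s j) + phi s a (orb s (S j))) n)
      by (rewrite sumR_plus, Sh; lra).
    rewrite <- (Rmult_1_r (INR n)). rewrite <- sumR_const.
    apply sumR_le. intros k Hk.
    pose proof (phi_bounds (orb s k)). pose proof (phi_bounds (orb s (S k))).
    destruct (Rle_dec (phi s a (orb s k)) 0); [lra|].
    assert (Hl : INR (s (orb s k)) < a).
    { revert n0. unfold phi, indic.
      destruct (Rlt_dec a (INR (orb s k))), (Rlt_dec (INR (s (orb s k))) a); intros; lra. }
    rewrite orb_S. rewrite (phi_left (s (orb s k))) by auto. lra. }
  rewrite <- rho_Phi in H. assert (0 < INR n) by (apply lt_0_INR; lia). nra.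
Qed.

Lemma mono_left (Hnd : code_nondecreasing s n a) p q : (p < n)%nat -> (q < n)%nat ->
  (p <= q)%nat -> INR q < a -> Lpt p <= Lpt q.
Proof.
  intros Hp Hq Hpq Hqa. destruct (Nat.eq_dec p q) as [->|Hne]; [lra|].
  destruct (idx_spec p Hp) as [I1 I2]. destruct (idx_spec q Hq) as [J1 J2].
  unfold Lpt. apply Hnd; auto. unfold gt_a. left.
  change (Nat.iter (idx p) s 0%nat) with (orb s (idx p)).
  change (Nat.iter (idx q) s 0%nat) with (orb s (idx q)). rewrite I2, J2.
  split; auto. apply lt_INR. lia.
Qed.

Lemma mono_right (Hnd : code_nondecreasing s n a) p q : (p < n)%nat -> (q < n)%nat ->
  (q <= p)%nat -> a < INR q -> Lpt p <= Lpt q.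
Proof.
  intros Hp Hq Hpq Hqa. destruct (Nat.eq_dec p q) as [->|Hne]; [lra|].
  destruct (idx_spec p Hp) as [I1 I2]. destruct (idx_spec q Hq) as [J1 J2].
  unfold Lpt. apply Hnd; auto. unfold gt_a. right.
  change (Nat.iter (idx p) s 0%nat) with (orb s (idx p)).
  change (Nat.iter (idx q) s 0%nat) with (orb s (idx q)). rewrite I2, J2.
  split; auto. apply lt_INR. lia.
Qed.

Definition fl x := Z.to_nat (Int_part x).
Definition ce x := (n - 1 - fl (INR (n - 1) - x))%nat.
Definition Lt x := if Rlt_dec x a then Lpt (fl x) else Lpt (ce x).

Lemma fl_spec x : 0 <= x -> INR (fl x) <= x < INR (fl x) + 1.
Proof.
  intros Hx. destruct (base_Int_part x) as [B1 B2].
  assert (Hp : (0 <= Int_part x)%Z).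
  { assert (IZR (-1) < IZR (Int_part x)) by lra. apply lt_IZR in H. lia. }
  unfold fl. rewrite INR_IZR_INZ, Z2Nat.id by auto. lra.
Qed.

Lemma INR_lt_nat p q : INR p < INR q + 1 -> (p <= q)%nat.
Proof. intros H. rewrite <- S_INR in H. apply INR_lt in H. lia. Qed.

Lemma LtL x : 0 <= x < a -> (fl x < n)%nat /\ INR (fl x) <= x < INR (fl x) + 1 /\ Lt x = Lpt (fl x).
Proof.
  intros Hx. pose proof (fl_spec x ltac:(lra)). split; [|split; auto].
  - assert (INR (fl x) < INR n) by (rewrite INR_n1 in Ha; lra). apply INR_lt; auto.
  - unfold Lt. destruct (Rlt_dec x a); [reflexivity|lra].
Qed.

Lemma LtR x : a < x <= INR (n - 1) -> (ce x < n)%nat /\ INR (ce x) - 1 < x <= INR (ce x) /\ Lt x = Lpt (ce x).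
Proof.
  intros Hx. pose proof (fl_spec (INR (n - 1) - x) ltac:(lra)) as H.
  set (m := fl (INR (n - 1) - x)) in *.
  assert (Hm : (m <= n - 1)%nat).
  { assert (INR m < INR (n - 1) + 1) by lra. apply INR_lt_nat; auto. }
  assert (E : INR (ce x) = INR (n - 1) - INR m) by (unfold ce; fold m; rewrite minus_INR; auto).
  split; [unfold ce; lia|split; [lra|]].
  unfold Lt. destruct (Rlt_dec x a); [lra|reflexivity].
Qed.

Lemma LtL_ge (Hnd : code_nondecreasing s n a) y p : 0 <= y < a -> (p < n)%nat -> INR p <= y -> Lpt p <= Lt y.
Proof.
  intros Hy Hp Hpy. destruct (LtL y Hy) as [H1 [H2 H3]]. rewrite H3.
  apply mono_left; auto. apply INR_lt_nat. lra. lra.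
Qed.

Lemma LtR_ge (Hnd : code_nondecreasing s n a) y p : a < y <= INR (n - 1) -> (p < n)%nat -> y <= INR p -> Lpt p <= Lt y.
Proof.
  intros Hy Hp Hpy. destruct (LtR y Hy) as [H1 [H2 H3]]. rewrite H3.
  apply mono_right; auto. apply INR_lt_nat. lra. lra.
Qed.

Lemma phr_left x : x < a -> phr x = 0.
Proof. intros H. unfold phr. rewrite indic_lt0 by lra. lra. Qed.

Lemma phr_right x : a < x -> phr x = indic _ (Rlt_dec (f x) a).
Proof. intros H. unfold phr. rewrite indic_lt1 by lra. lra. Qed.

Lemma indic_bounds u v : 0 <= indic _ (Rlt_dec u v) <= 1.
Proof. unfold indic. destruct (Rlt_dec u v); lra. Qed.

Lemma Lt_step (Hnd : code_nondecreasing s n a) x : 0 <= x <= INR (n - 1) -> x <> a -> f x <> a ->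
  Lt x + rho_pat s n - phr x <= Lt (f x).
Proof.
  intros Hx Nx Nfx. pose proof (f_range x Hx) as Hfx. pose proof a_in as Hain.
  pose proof lam_neg as Hlam. pose proof k0_le as Hk0.
  destruct (Rlt_dec x a) as [Lx|Lx].
  - destruct (LtL x ltac:(lra)) as [I1 [I2 I3]]. set (i := fl x) in *.
    rewrite I3, phr_left by auto.
    assert (Hik : (i <= k0)%nat) by (apply INR_lt_nat; lra).
    assert (Si : Lpt (s i) = Lpt i + rho_pat s n) by (rewrite Lpt_step, phi_left by (lia || lra); lra).
    destruct (Nat.eq_dec i k0) as [Ei|Ei].
    + assert (Hp : INR k0 <= x <= INR k0 + 1) by (rewrite <- Ei; lra).
      pose proof (near_a x Hp) as Na.
      assert (Na2 : INR (s k0) - a = lam * (INR k0 - a)).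
      { rewrite <- (plin_nat s n Hn) by lia. apply near_a. lra. }
      assert (a < f x) by nra.
      assert (f x <= INR (s k0)) by nra.
      rewrite <- Ei in *. assert (Lpt (s i) <= Lt (f x)) by (apply LtR_ge; auto; [lra|apply s_lt; auto; lia]). lra.
    + assert (Hi1 : INR (S i) < a) by (assert (INR (S i) <= INR k0) by (apply le_INR; lia); lra).
      assert (Si1 : Lpt (s (S i)) = Lpt (S i) + rho_pat s n) by (rewrite Lpt_step, phi_left by (lra||lia); lra).
      assert (M : Lpt i <= Lpt (S i)) by (apply mono_left; auto; lia).
      rewrite (piece_val i x) in * by (lia || lra).
      set (t := x - INR i) in *. assert (0 <= t <= 1) by (unfold t; lra).
      assert (A1 := s_lt s n Hcyc i ltac:(lia)). assert (A2 := s_lt s n Hcyc (S i) ltac:(lia)).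
      set (fx := (1 - t) * INR (s i) + t * INR (s (S i))) in *.
      pose proof (Rlt_dec fx a) as Dfx; destruct Dfx as [Lf|Lf].
      * destruct (Rle_dec (INR (s i)) fx).
        -- eapply Rle_trans; [|apply (LtL_ge Hnd fx (s i)); auto; lra]. lra.
        -- apply Rnot_le_lt in n0. eapply Rle_trans; [|apply (LtL_ge Hnd fx (s (S i))); auto; [lra|unfold fx in *; destruct (Rle_lt_dec (INR (s i)) (INR (s (S i)))); nra]]. lra.
      * destruct (Rle_dec fx (INR (s i))).
        -- eapply Rle_trans; [|apply (LtR_ge Hnd fx (s i)); auto; lra]. lra.
        -- apply Rnot_le_lt in n0. eapply Rle_trans; [|apply (LtR_ge Hnd fx (s (S i))); auto; [lra|unfold fx in *; destruct (Rle_lt_dec (INR (s i)) (INR (s (S i)))); nra]]. lra.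
  - assert (Lx' : a < x) by lra.
    destruct (LtR x ltac:(lra)) as [J1 [J2 J3]]. set (j := ce x) in *.
    rewrite J3, phr_right by auto.
    assert (Hkj : (S k0 <= j)%nat) by (apply INR_lt; lra).
    destruct j as [|i]; [lia|]. rewrite S_INR in J2.
    assert (Haj : a < INR (S i)) by (rewrite S_INR; lra).
    assert (Sj : Lpt (s (S i)) = Lpt (S i) + rho_pat s n - indic _ (Rlt_dec (INR (s (S i))) a))
      by (rewrite Lpt_step, phi_right by (lia || lra); lra).
    destruct (Nat.eq_dec i k0) as [Ei|Ei].
    + assert (Hp : INR k0 <= x <= INR k0 + 1) by (rewrite <- Ei; lra).
      pose proof (near_a x Hp) as Na.
      assert (Na2 : INR (s (S k0)) - a = lam * (INR (S k0) - a)).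
      { rewrite <- (plin_nat s n Hn) by lia. apply near_a. rewrite S_INR; lra. }
      rewrite S_INR in Na2.
      assert (f x < a) by nra. assert (INR (s (S k0)) <= f x) by nra.
      rewrite indic_lt1 by auto. rewrite <- Ei in *. rewrite indic_lt1 in Sj by lra.
      rewrite <- Sj. apply LtL_ge; auto; [lra|apply s_lt; auto].
    + assert (Hai : a < INR i) by (assert (INR (S k0) <= INR i) by (apply le_INR; lia); rewrite S_INR in *; lra).
      assert (Si : Lpt (s i) = Lpt i + rho_pat s n - indic _ (Rlt_dec (INR (s i)) a))
        by (rewrite Lpt_step, phi_right by (auto||lia); lra).
      assert (M : Lpt (S i) <= Lpt i) by (apply mono_right; auto; lia).
      pose proof (indic_bounds (INR (s i)) a). pose proof (indic_bounds (INR (s (S i))) a).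
      rewrite (piece_val i x) in * by (lia || lra).
      set (t := x - INR i) in *. assert (0 <= t <= 1) by (unfold t; lra).
      assert (A1 := s_lt s n Hcyc i ltac:(lia)). assert (A2 := s_lt s n Hcyc (S i) ltac:(lia)).
      set (fx := (1 - t) * INR (s i) + t * INR (s (S i))) in *.
      pose proof (Rlt_dec fx a) as Dfx; destruct Dfx as [Lf|Lf].
      * rewrite indic_lt1 by auto.
        destruct (Rle_dec (INR (s i)) fx).
        -- eapply Rle_trans; [|apply (LtL_ge Hnd fx (s i)); auto; lra]. lra.
        -- apply Rnot_le_lt in n0. eapply Rle_trans; [|apply (LtL_ge Hnd fx (s (S i))); auto; [lra|unfold fx in *; destruct (Rle_lt_dec (INR (s i)) (INR (s (S i)))); nra]]. lra.
      * rewrite indic_lt0 by auto.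
        destruct (Rle_dec fx (INR (s i))).
        -- rewrite indic_lt0 in Si by lra.
           eapply Rle_trans; [|apply (LtR_ge Hnd fx (s i)); auto; lra]. lra.
        -- apply Rnot_le_lt in n0. assert (fx <= INR (s (S i))) by (unfold fx in *; destruct (Rle_lt_dec (INR (s i)) (INR (s (S i)))); nra).
           rewrite indic_lt0 in Sj by lra.
           eapply Rle_trans; [|apply (LtR_ge Hnd fx (s (S i))); auto; lra]. lra.
Qed.

Lemma sum_phr_ge (Hnd : code_nondecreasing s n a) z m : 0 <= z <= INR (n - 1) ->
  Nat.iter m f z = z -> (forall k, Nat.iter k f z <> a) ->
  INR m * rho_pat s n <= sumR (fun k => phr (Nat.iter k f z)) m.
Proof.
  intros Hz Hm Hav.
  assert (T := sumR_tele (fun k => Lt (Nat.iter k f z)) m). cbv beta in T.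
  rewrite Hm in T. change (Nat.iter 0 f z) with z in T.
  assert (Le : sumR (fun k => rho_pat s n - phr (Nat.iter k f z)) m <=
               sumR (fun k => Lt (Nat.iter (S k) f z) - Lt (Nat.iter k f z)) m).
  { apply sumR_le. intros k Hk. change (Nat.iter (S k) f z) with (f (Nat.iter k f z)).
    pose proof (Lt_step Hnd (Nat.iter k f z) (iter_range k z Hz) (Hav k) (Hav (S k))). lra. }
  rewrite sumR_minus, sumR_const in Le. lra.
Qed.

Lemma iter_fix_a k : Nat.iter k f a = a.
Proof. induction k; simpl; auto. rewrite IHk; auto. Qed.

Lemma avoid_a z p : z <> a -> (0 < p)%nat -> Nat.iter p f z = z -> forall k, Nat.iter k f z <> a.
Proof.
  intros Nz Hp Hz k E.
  assert (Hm : forall q, Nat.iter (q * p) f z = z).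
  { induction q; simpl; auto. rewrite Nat.iter_add, IHq. auto. }
  apply Nz. rewrite <- (Hm k).
  replace (k * p)%nat with ((k * p - k) + k)%nat by nia.
  rewrite Nat.iter_add, E. apply iter_fix_a.
Qed.

Lemma ornum_eq z m : 0 <= z <= INR (n - 1) -> (0 < m)%nat -> Nat.iter m f z = z ->
  (forall k, Nat.iter k f z <> a) ->
  ornum f z m = sumR (fun k => phr (Nat.iter k f z)) m / INR m.
Proof.
  intros Hz Hm Hmz Hav. unfold ornum.
  change (sumR (fun k => scr (Nat.iter k f z)) m / (2 * INR m) =
    sumR (fun k => phr (Nat.iter k f z)) m / INR m).
  rewrite orbit_sc; auto. assert (0 < INR m) by (apply lt_0_INR; lia). field. lra.
Qed.

Lemma rho_in_set : ornum_set s n (rho_pat s n).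
Proof.
  assert (Hnp : (0 < n)%nat) by lia.
  exists 0, n. assert (R0 : 0 <= 0 <= INR (n - 1)) by (split; [lra| apply pos_INR]).
  assert (It : forall k, Nat.iter k f 0 = INR (orb s k)).
  { intros k. replace 0 with (INR 0) by reflexivity. rewrite iter_nat by lia. reflexivity. }
  assert (Hn0 : Nat.iter n f 0 = 0) by (rewrite It, (orb_n s n Hn Hcyc); reflexivity).
  assert (Hav : forall k, Nat.iter k f 0 <> a) by (intros k; rewrite It; apply a_not_nat, orb_lt; auto).
  split; auto. split; auto. split; auto. split.
  - intros k Hk E. rewrite It in E. change 0 with (INR (orb s 0)) in E.
    apply INR_eq in E. apply (orb_inj s n Hn Hcyc) in E; lia.
  - rewrite ornum_eq; auto.
    rewrite (sumR_ext _ (fun k => phi s a (orb s k))).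
    + fold (Phi n). rewrite <- rho_Phi. assert (0 < INR n) by (apply lt_0_INR; lia). field. lra.
    + intros k Hk. rewrite It, phi_phr; auto. apply orb_lt; auto.
Qed.

Theorem backward : code_nondecreasing s n a -> r_pi_eq s n (rho_pat s n).
Proof.
  intros Hnd. split.
  - intros y [x [m [Hx [Hm [Hmx [Hmin ->]]]]]].
    assert (Nx : x <> a).
    { intros ->. apply (Hmin 1%nat); [lia|]. simpl. auto. }
    assert (Hav := avoid_a x m Nx ltac:(lia) Hmx).
    rewrite ornum_eq; auto; [|lia].
    assert (H := sum_phr_ge Hnd x m Hx Hmx Hav).
    assert (0 < INR m) by (apply lt_0_INR; lia).
    apply (Rmult_le_reg_r (INR m)); auto. unfold Rdiv. rewrite Rmult_assoc, Rinv_l by lra. lra.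
  - intros b Hb. apply Hb. apply rho_in_set.
Qed.

Lemma f_Lip : Lip (INR n) f.
Proof. apply (plin_Lip s n Hn (s_lt s n Hcyc)). Qed.

Lemma n_pos : 0 < INR n.
Proof. apply lt_0_INR. lia. Qed.

Lemma f_cont : continuity f.
Proof. apply (Lip_cont (INR n)). apply n_pos. apply f_Lip. Qed.

Lemma chain (Y : R) k : forall c d, inh (Nat.iter k f Y) a c -> inh (Nat.iter k f Y) a d -> c <> d ->
  exists l r, inh Y a l /\ inh Y a r /\ Nat.iter k f l = c /\ Nat.iter k f r = d /\
    forall t, inh l r t -> (forall j, (j <= k)%nat -> inh (Nat.iter j f Y) a (Nat.iter j f t)) /\
                           inh c d (Nat.iter k f t).
Proof.
  induction k; intros c d Hc Hd Hcd.
  - exists c, d. simpl in *. split; auto. split; auto. split; auto. split; auto.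
    intros t Ht. split; auto. intros j Hj. replace j with 0%nat by lia. simpl.
    apply (inh_conv Y a c d t); auto.
  - destruct (IVT_hull f (Nat.iter k f Y) a c f_cont) as [p [Hp Ep]].
    { rewrite Hfa. auto. }
    destruct (IVT_hull f (Nat.iter k f Y) a d f_cont) as [q [Hq Eq]].
    { rewrite Hfa. auto. }
    destruct (PB (INR n) f p q c d n_pos f_Lip Ep Eq Hcd) as [l' [r' [Hl' [Hr' [El' [Er' Ht']]]]]].
    assert (Hl'k : inh (Nat.iter k f Y) a l') by (apply (inh_conv _ _ p q); auto).
    assert (Hr'k : inh (Nat.iter k f Y) a r') by (apply (inh_conv _ _ p q); auto).
    assert (Nlr : l' <> r') by (intros E; apply Hcd; rewrite <- El', <- Er', E; auto).
    destruct (IHk l' r' Hl'k Hr'k Nlr) as [l [r [Hl [Hr [El [Er Ht]]]]]].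
    exists l, r. split; auto. split; auto. split; [simpl; rewrite El; auto|].
    split; [simpl; rewrite Er; auto|].
    intros t Htr. destruct (Ht t Htr) as [T1 T2].
    assert (T3 : inh c d (Nat.iter (S k) f t)) by (simpl; apply Ht'; auto).
    split; auto.
    intros j Hj. destruct (Nat.eq_dec j (S k)) as [->|Hne]; [|apply T1; lia].
    apply (inh_conv _ _ c d); auto.
Qed.

Definition gap := Rmin (a - INR k0) (INR k0 + 1 - a).

Lemma gap_pos : 0 < gap.
Proof. pose proof a_in. unfold gap. apply Rmin_case; lra. Qed.

Lemma lam_abs : Rabs lam <= INR n.
Proof. unfold lam. apply (slope_bound s n Hn (s_lt s n Hcyc)). apply k0_le. Qed.

Lemma near_iter j t : INR n ^ j * Rabs (t - a) < gap -> Nat.iter j f t - a = lam ^ j * (t - a).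
Proof.
  induction j; intros H.
  - simpl. ring.
  - assert (Hn1 : 1 <= INR n) by (apply (le_INR 1); lia).
    assert (INR n ^ j * Rabs (t - a) <= INR n ^ S j * Rabs (t - a)).
    { simpl. apply Rmult_le_compat_r. apply Rabs_pos.
      pose proof (pow_le (INR n) j ltac:(lra)). nra. }
    assert (IH := IHj ltac:(lra)).
    assert (Rabs (lam ^ j * (t - a)) < gap).
    { rewrite Rabs_mult, <- RPow_abs.
      assert (Rabs lam ^ j <= INR n ^ j) by (apply pow_incr; split; [apply Rabs_pos|apply lam_abs]).
      pose proof (Rabs_pos (t - a)). nra. }
    simpl. rewrite <- IH in H1. apply Rabs_def2 in H1.
    assert (gap <= a - INR k0) by apply Rmin_l. assert (gap <= INR k0 + 1 - a) by apply Rmin_r.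
    rewrite near_a by lra. rewrite IH. ring.
Qed.

Lemma side_of e w : inh e a w -> w <> a -> (e - a) * (w - a) > 0.
Proof. intros [H|H] Hw; nra. Qed.

Lemma alternation (Y : R) u l : (0 < u)%nat -> l <> a ->
  (forall t, inh l a t -> forall j, (j <= u)%nat -> inh (Nat.iter j f Y) a (Nat.iter j f t)) ->
  forall j, (j < u)%nat -> (Nat.iter j f Y - a) * (Nat.iter (S j) f Y - a) < 0.
Proof.
  intros Hu Hl Hch.
  set (dl := gap / (2 * INR n ^ u)).
  assert (Hnu : 0 < INR n ^ u) by (apply pow_lt, n_pos).
  assert (Hdl : 0 < dl) by (unfold dl; apply Rdiv_lt_0_compat; [apply gap_pos|lra]).
  assert (Hla : 0 < Rabs (l - a)) by (apply Rabs_pos_lt; lra).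
  set (th := dl / (dl + Rabs (l - a))).
  assert (Hth : 0 < th < 1).
  { unfold th. split. apply Rdiv_lt_0_compat; lra.
    apply (Rmult_lt_reg_r (dl + Rabs (l - a))). lra. unfold Rdiv. rewrite Rmult_assoc, Rinv_l by lra. lra. }
  set (t := a + th * (l - a)).
  assert (Ht : inh l a t).
  { unfold inh, t. destruct (Rle_dec l a); [left|right]; nra. }
  assert (Hta : Rabs (t - a) < dl).
  { unfold t. replace (a + th * (l - a) - a) with (th * (l - a)) by ring.
    rewrite Rabs_mult, (Rabs_right th) by lra. unfold th.
    apply (Rmult_lt_reg_r (dl + Rabs (l - a))). lra.
    unfold Rdiv. field_simplify; [|lra]. nra. }
  assert (Htne : t <> a) by (unfold t; intros E; assert (th * (l - a) = 0) by lra;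
    apply Rmult_integral in H; destruct H; lra).
  assert (Hn1 : 1 <= INR n) by (apply (le_INR 1); lia).
  assert (Small : forall j, (j <= u)%nat -> INR n ^ j * Rabs (t - a) < gap).
  { intros j Hj. assert (INR n ^ j <= INR n ^ u) by (apply Rle_pow; auto).
    assert (INR n ^ u * Rabs (t - a) < INR n ^ u * dl) by (apply Rmult_lt_compat_l; auto).
    unfold dl in H0. replace (INR n ^ u * (gap / (2 * INR n ^ u))) with (gap / 2) in H0 by (field; lra).
    pose proof gap_pos. pose proof (Rabs_pos (t - a)). nra. }
  assert (Side : forall j, (j <= u)%nat -> (Nat.iter j f Y - a) * (Nat.iter j f t - a) > 0).
  { intros j Hj. specialize (Hch t Ht j Hj). apply side_of; auto.
    assert (E := near_iter j t (Small j Hj)).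
    assert (lam ^ j <> 0) by (apply pow_nonzero; pose proof lam_neg; lra).
    assert (lam ^ j * (t - a) <> 0) by (intros E'; apply Rmult_integral in E'; destruct E'; lra).
    lra. }
  intros j Hj.
  pose proof (Side j ltac:(lia)) as S1. pose proof (Side (S j) ltac:(lia)) as S2.
  rewrite (near_iter j t (Small j ltac:(lia))) in S1.
  rewrite (near_iter (S j) t (Small (S j) ltac:(lia))) in S2.
  simpl pow in S2.
  set (A := Nat.iter j f Y - a) in *. set (B := Nat.iter (S j) f Y - a) in *.
  set (X := lam ^ j * (t - a)) in *.
  replace (lam * lam ^ j * (t - a)) with (lam * X) in S2 by (unfold X; ring).
  pose proof lam_neg.
  assert (HZ1 : 0 < X -> lam * X < 0) by (intros; nra).
  assert (HZ2 : X < 0 -> 0 < lam * X) by (intros; nra).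
  set (Z := lam * X) in *. clearbody Z X A B.
  destruct (Rlt_dec 0 X); destruct (Rlt_dec 0 A); destruct (Rlt_dec 0 B); try nra.
Qed.

Lemma sum_periodic (h : nat -> R) d q : (forall j, h (d + j)%nat = h j) ->
  sumR h (q * d) = INR q * sumR h d.
Proof.
  intros Hp. induction q. simpl. lra.
  replace (S q * d)%nat with (d + q * d)%nat by lia. rewrite sumR_split.
  rewrite (sumR_ext (fun k => h (d + k)%nat) h) by auto. rewrite IHq, S_INR. ring.
Qed.

Lemma iter_period z d q j : Nat.iter d f z = z -> Nat.iter (q * d + j) f z = Nat.iter j f z.
Proof.
  intros Hd. induction q. reflexivity.
  replace (S q * d + j)%nat with ((q * d + j) + d)%nat by lia.
  rewrite Nat.iter_add, Hd. auto.
Qed.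

Lemma phr_same y y' : (y - a) * (y' - a) > 0 -> (f y - a) * (f y' - a) > 0 -> phr y = phr y'.
Proof.
  intros H1 H2. unfold phr, indic.
  destruct (Rlt_dec a y), (Rlt_dec a y'), (Rlt_dec (f y) a), (Rlt_dec (f y') a); try lra; nra.
Qed.

Theorem forward : r_pi_eq s n (rho_pat s n) -> code_nondecreasing s n a.
Proof.
  intros [Hlow _] k1 k2 Hk1 Hk2 Hgt. apply Rnot_lt_le. intros Hc.
  change (Nat.iter k1 s 0%nat) with (orb s k1) in Hgt.
  change (Nat.iter k2 s 0%nat) with (orb s k2) in Hgt.
  set (X := INR (orb s k1)) in *. set (Y := INR (orb s k2)) in *.
  assert (Hk12 : k1 <> k2) by (intros ->; unfold gt_a in Hgt; lra).
  set (u := if Nat.ltb k2 k1 then (k1 - k2)%nat else (n + k1 - k2)%nat).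
  assert (Hu : (0 < u)%nat /\ ((k2 + u = k1)%nat \/ (k2 + u = n + k1)%nat)).
  { unfold u. destruct (Nat.ltb_spec k2 k1); lia. }
  destruct Hu as [Hu Hu2].
  assert (Ce : code s n a (k2 + u) = code s n a k1).
  { destruct Hu2 as [E|E]; rewrite E; auto. apply code_plus_n. }
  assert (Ej : forall j, Nat.iter j f Y = INR (orb s (k2 + j))).
  { intros j. unfold Y. rewrite iter_nat by (apply orb_lt; auto).
    rewrite <- orb_add. f_equal. f_equal. lia. }
  assert (Eu : Nat.iter u f Y = X).
  { rewrite Ej. unfold X. destruct Hu2 as [E|E]; rewrite E; auto.
    rewrite (orb_plus_n s n Hn Hcyc). auto. }
  set (PhiY := sumR (fun j => phr (Nat.iter j f Y)) u).
  assert (HPhi : PhiY < INR u * rho_pat s n).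
  { assert (PhiY = Phi (k2 + u) - Phi k2).
    { unfold PhiY, Phi. rewrite sumR_split.
      rewrite (sumR_ext (fun j => phr (Nat.iter j f Y)) (fun k => phi s a (orb s (k2 + k)))).
      lra. intros j Hj. rewrite Ej, phi_phr; auto. apply orb_lt; auto. }
    assert (code s n a (k2 + u) = INR (k2 + u) * rho_pat s n - Phi (k2 + u)) by reflexivity.
    assert (code s n a k2 = INR k2 * rho_pat s n - Phi k2) by reflexivity.
    rewrite plus_INR in H0. lra. }
  assert (HX : X <> a) by (apply a_not_nat, orb_lt; auto).
  assert (HY : Y <> a) by (apply a_not_nat, orb_lt; auto).
  assert (RX : 0 <= X <= INR (n - 1)).
  { unfold X. split. apply pos_INR. apply le_INR. pose proof (orb_lt s n Hn Hcyc k1). lia. }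
  assert (RY : 0 <= Y <= INR (n - 1)).
  { unfold Y. split. apply pos_INR. apply le_INR. pose proof (orb_lt s n Hn Hcyc k2). lia. }
  assert (I1 : inh (Nat.iter u f Y) a X) by (rewrite Eu; unfold inh; destruct (Rle_dec X a); [left|right]; lra).
  assert (I2 : inh (Nat.iter u f Y) a a) by (rewrite Eu; unfold inh; destruct (Rle_dec X a); [left|right]; lra).
  destruct (chain Y u X a I1 I2 HX) as [l [r [Hl [Hr [El [Er Hch]]]]]].
  assert (Hla : l <> a) by (intros ->; rewrite iter_fix_a in El; lra).
  destruct (Req_dec r a) as [Era|Nra].
  -
    subst r.
    assert (Alt := alternation Y u l Hu Hla (fun t Ht => proj1 (Hch t Ht)) ).
    assert (Hrho := rho_half).
    assert (Hsides : forall j, Nat.iter j f Y <> a).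
    { intros j. rewrite Ej. apply a_not_nat, orb_lt; auto. }
    assert (Ph : forall j, (j < u)%nat -> phr (Nat.iter j f Y) = Gr (Nat.iter j f Y)).
    { intros j Hj. specialize (Alt j Hj). unfold phr, Gr, indic. simpl in Alt |- *.
      destruct (Rlt_dec a (Nat.iter j f Y)), (Rlt_dec (f (Nat.iter j f Y)) a); try lra; nra. }
    assert (G1 : forall j, (j < u)%nat -> Gr (Nat.iter j f Y) + Gr (Nat.iter (S j) f Y) = 1).
    { intros j Hj. specialize (Alt j Hj). unfold Gr, indic.
      destruct (Rlt_dec a (Nat.iter j f Y)), (Rlt_dec a (Nat.iter (S j) f Y)); try lra;
      pose proof (Hsides j); pose proof (Hsides (S j)); nra. }
    assert (Gu : Gr (Nat.iter u f Y) = Gr Y).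
    { rewrite Eu. unfold Gr, indic, gt_a in *. destruct (Rlt_dec a X), (Rlt_dec a Y); lra. }
    assert (2 * PhiY = INR u).
    { unfold PhiY. rewrite (sumR_ext _ (fun j => Gr (Nat.iter j f Y))) by auto.
      assert (Sh := sumR_shift (fun j => Gr (Nat.iter j f Y)) u). cbv beta in Sh.
      rewrite Gu in Sh. change (Nat.iter 0 f Y) with Y in Sh.
      assert (sumR (fun j => Gr (Nat.iter j f Y) + Gr (Nat.iter (S j) f Y)) u = INR u).
      { rewrite (sumR_ext _ (fun _ => 1)) by auto. rewrite sumR_const. ring. }
      rewrite sumR_plus, Sh in H. lra. }
    assert (0 < INR u) by (apply lt_0_INR; auto). nra.
  -
    set (g := fun t => Nat.iter u f t - t).
    assert (Hg : continuity g) by (apply continuity_minus; [apply (iter_cont s n Hn (s_lt s n Hcyc))|apply derivable_continuous, derivable_id]).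
    destruct (IVT_hull g l r 0 Hg) as [z [Hz Ez]].
    { unfold g. rewrite El, Er. unfold inh, gt_a in *. lra. }
    unfold g in Ez. assert (Hzz : Nat.iter u f z = z) by lra.
    assert (Hza : z <> a) by (intros ->; unfold inh, gt_a in *; lra).
    assert (Rz : 0 <= z <= INR (n - 1)) by (unfold inh in *; lra).
    assert (Hav := avoid_a z u Hza Hu Hzz).
    destruct (Hch z Hz) as [Hside _].
    assert (Ej2 : forall j, Nat.iter j f Y <> a) by (intros j; rewrite Ej; apply a_not_nat, orb_lt; auto).
    assert (SameS : forall j, (j <= u)%nat -> (Nat.iter j f Y - a) * (Nat.iter j f z - a) > 0).
    { intros j Hj. specialize (Hside j Hj). specialize (Ej2 j). specialize (Hav j).
      unfold inh in Hside. destruct Hside; destruct (Rlt_dec (Nat.iter j f Y) a); nra. }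
    assert (Sz : sumR (fun j => phr (Nat.iter j f z)) u = PhiY).
    { unfold PhiY. apply sumR_ext. intros j Hj. symmetry. apply phr_same.
      apply SameS; lia. apply (SameS (S j)); lia. }
    destruct (min_exists (fun d => Nat.iter d f z = z) u Hzz Hu) as [d [Hd [Pd Hmin]]].
    assert (Hd2 : (2 <= d)%nat).
    { destruct (Nat.eq_dec d 1) as [->|]; [|lia]. exfalso. apply Hza. apply fix_unique; auto. }
    assert (Hdiv : (u mod d = 0)%nat).
    { destruct (Nat.eq_dec (u mod d) 0) as [|Hne]; auto. exfalso.
      apply (Hmin (u mod d)). split; [lia|apply Nat.mod_upper_bound; lia].
      rewrite <- (iter_period z d (u / d) (u mod d) Pd).
      rewrite Nat.mul_comm, <- Nat.div_mod_eq. auto. }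
    assert (Uq : u = ((u / d) * d)%nat) by (rewrite (Nat.div_mod_eq u d) at 1; lia).
    assert (Sd : sumR (fun j => phr (Nat.iter j f z)) u =
                 INR (u / d) * sumR (fun j => phr (Nat.iter j f z)) d).
    { rewrite Uq at 1. apply sum_periodic. intros j.
      rewrite <- (iter_period z d 1 j Pd). f_equal. f_equal. lia. }
    assert (Hq : (0 < u / d)%nat).
    { destruct (Nat.eq_dec (u / d) 0) as [E|]; [rewrite E in Uq; simpl in Uq; lia|lia]. }
    assert (Hdp : 0 < INR d) by (apply lt_0_INR; lia).
    assert (Hqp : 0 < INR (u / d)) by (apply lt_0_INR; lia).
    assert (Hsum : sumR (fun j => phr (Nat.iter j f z)) d < INR d * rho_pat s n).
    { assert (INR u = INR (u / d) * INR d) by (rewrite Uq at 1; rewrite mult_INR; auto).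
      rewrite Sz in Sd. rewrite H in HPhi. rewrite Sd in HPhi. nra. }
    assert (Hin : ornum_set s n (ornum f z d)).
    { exists z, d. exact (conj Rz (conj Hd2 (conj Pd (conj Hmin eq_refl)))). }
    specialize (Hlow _ Hin). rewrite ornum_eq in Hlow by (auto; lia).
    apply (Rmult_le_compat_r (INR d)) in Hlow; [|lra].
    unfold Rdiv in Hlow. rewrite Rmult_assoc, Rinv_l in Hlow by lra. lra.
Qed.

Theorem main_equiv : r_pi_eq s n (rho_pat s n) <-> code_nondecreasing s n a.
Proof. split; [apply forward|apply backward]. Qed.

End Fix.

Theorem corollary3p4 (s : nat -> nat) (n : nat) (a : R) :
  (2 <= n)%nat ->
  is_cyclic_perm s n ->
  convergent s n ->
  0 <= a <= INR (n - 1) -> plin s n a = a ->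
  (r_pi_eq s n (rho_pat s n) <-> code_nondecreasing s n a).
Proof.
  intros Hn Hcyc Hconv Ha Hfa. exact (main_equiv s n a Hn Hcyc Hconv Ha Hfa).
Qed.
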